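(* Let $\mathbf{d}=(d_0,d_1,d_2,\ldots)$ be the period-doubling sequence. For every positive integer $k$, the $t$-Hankel determinant $H_k(\mathbf{d},t)$ is a polynomial in $t$ of degree $k$ whose leading coefficient is the only one of its coefficients that is an odd integer. In other words, $$H_k(\mathbf{d},t)\equiv t^k \pmod 2.$$
   Context: The Thue--Morse sequence $\mathbf{e}=(e_0,e_1,\ldots)$ is defined by $\sum_{k\ge0}e_kx^k=\prod_{k\ge0}(1-x^{2^k})$. The period-doubling sequence $\mathbf{d}$ is defined by $d_k=\frac12|e_k-e_{k+1}|$ for $k\ge0$, so $\mathbf{d}=(1,0,1,1,1,0,\ldots)$. For a sequence $\mathbf{c}=(c_0,c_1,\ldots)$, a parameter $t$ and $k\ge1$, the $t$-Hankel determinant is $H_k(\mathbf{c},t)=\det(a_{ij})_{0\le i,j\le k-1}$ where $a_{ij}=c_{i+j}$ for $i\ne j$ and $a_{ii}=c_{2i}\,t$ (i.e. the ordinary Hankel determinant with every diagonal entry multiplied by $t$). A congruence of polynomials modulo $2$ means coefficientwise congruence. *)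

(* Defs.v *)
From mathcomp Require Import all_boot all_order all_algebra.
Set Implicit Arguments. Unset Strict Implicit. Unset Printing Implicit Defensive.
Import GRing.Theory Num.Theory.
Local Open Scope ring_scope.

(* Thue--Morse: e_k = coefficient of x^k in prod_{j>=0} (1 - x^(2^j)).
   Factors with 2^j > k do not affect the coefficient of x^k, so it suffices
   to take the finite product over j < k.+1. *)
Definition tm (k : nat) : int :=
  (\prod_(j < k.+1) (1 - 'X^(2 ^ j) : {poly int}))`_k.

Definition pd (k : nat) : int := ((`|tm k - tm k.+1|)%R %/ 2)%Z.

Definition tHankel_mx (c : nat -> int) (k : nat) : 'M[{poly int}]_k :=
  \matrix_(i < k, j < k)
    (if i == j then (c (i + j)%N)%:P * 'X else (c (i + j)%N)%:P).

Definition tHankel (c : nat -> int) (k : nat) : {poly int} :=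
  \det (tHankel_mx c k).

Definition poly_congr (m : int) (p q : {poly int}) : Prop :=
  forall i : nat, (m %| (p - q)`_i)%Z.

(* Main.v *)
Require Import Defs.
From mathcomp Require Import all_boot all_order all_algebra all_fingroup.
From mathcomp Require Import zify ring.
Set Implicit Arguments. Unset Strict Implicit. Unset Printing Implicit Defensive.
Import GRing.Theory Num.Theory.
Local Open Scope ring_scope.



Definition Pp (n : nat) : {poly int} := \prod_(j < n) (1 - 'X^(2 ^ j)).

Lemma Pp_stab n k : (k < 2 ^ n)%N -> (Pp n.+1)`_k = (Pp n)`_k.
Proof.
move=> hk; rewrite /Pp big_ord_recr /= mulrBr mulr1 coefB coefMXn hk subr0 //.
Qed.

Lemma Pp_stab2 n n' k : (k < 2 ^ n)%N -> (n <= n')%N -> (Pp n')`_k = (Pp n)`_k.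
Proof.
move=> hk; elim: n' => [|n' IH]; first by rewrite leqn0 => /eqP ->.
rewrite leq_eqVlt => /orP [/eqP -> //| hn].
rewrite Pp_stab ?IH //; apply: (leq_trans hk); rewrite leq_exp2l //.
Qed.

Lemma Pp_rec n : Pp n.+1 = (1 - 'X) * (Pp n \Po 'X^2).
Proof.
rewrite /Pp big_ord_recl /= expn0 expr1; congr (_ * _).
elim: n => [|n IH]; first by rewrite !big_ord0 comp_polyC.
rewrite big_ord_recr /= IH [in RHS]big_ord_recr /= comp_polyM; congr (_ * _).
rewrite comp_polyB comp_polyC comp_Xn_poly -exprM expnS; done.
Qed.

Lemma coef_rec n i : (Pp n.+1)`_i =
  (if (2 %| i)%N then (Pp n)`_(i %/ 2)%N else 0) -
  (if i is i'.+1 then (if (2 %| i')%N then (Pp n)`_(i' %/ 2)%N else 0) else 0).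
Proof.
rewrite Pp_rec mulrBl mul1r coefB coef_comp_poly_Xn // coefXM.
case: i => [|i] //=; by rewrite coef_comp_poly_Xn.
Qed.

Lemma tmE k : tm k = (Pp k.+1)`_k. Proof. by []. Qed.

Lemma tm_even i : tm (2 * i) = tm i.
Proof.
rewrite !tmE coef_rec dvdn_mulr // (mulKn _ (isT : (0 < 2)%N)).
case: i => [|i].
  by rewrite /Pp big_ord0 big_ord1 /= subr0 coefB coef1 coefXn.
have -> : (2 * i.+1 = (2 * i).+1.+1)%N by lia.
have -> : (2 %| (2*i).+1)%N = false by rewrite -[(2*i).+1]addn1 dvdn_addr ?dvdn_mulr.
rewrite subr0.
apply: Pp_stab2; last by lia.
by apply: (leq_trans (ltn_expl _ (isT : (1 < 2)%N))); rewrite leq_exp2l //; lia.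
Qed.

Lemma tm_odd i : tm (2 * i).+1 = - tm i.
Proof.
have hf : (2 %| (2*i).+1)%N = false by rewrite -[(2*i).+1]addn1 dvdn_addr ?dvdn_mulr.
rewrite !tmE coef_rec hf dvdn_mulr // (mulKn _ (isT : (0 < 2)%N)) sub0r.
congr (- _); apply: Pp_stab2; last by lia.
by apply: (leq_trans (ltn_expl _ (isT : (1 < 2)%N))); rewrite leq_exp2l //; lia.
Qed.

Lemma nat_par k : exists i, k = (2 * i)%N \/ k = (2 * i).+1.
Proof.
exists k./2; rewrite -{1 3}(odd_double_half k) -muln2 mulnC.
by case: (odd k); [right|left].
Qed.

Lemma tm_pm k : tm k = 1 \/ tm k = -1.
Proof.
elim/ltn_ind: k => k IH.
have [i [hk|hk]] := nat_par k; subst k.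
  case: i IH => [|i] IH.
    by left; rewrite tmE /Pp big_ord1 /= coefB coef1 coefXn.
  by rewrite tm_even; apply: IH; lia.
rewrite tm_odd; have [->|->] := IH i ltac:(lia); [right|left] => //.
Qed.

Lemma pd_even i : pd (2 * i) = 1.
Proof.
rewrite /pd tm_even -[(2 * i).+1]/((2*i).+1) tm_odd.
by have [->|->] := tm_pm i.
Qed.

Lemma pd_odd i : pd (2 * i).+1 = 1 - pd i.
Proof.
rewrite /pd tm_odd.
have -> : (2 * i).+2 = (2 * i.+1)%N by lia.
rewrite tm_even.
by have [->|->] := tm_pm i; have [->|->] := tm_pm i.+1.
Qed.


Lemma F2_11 : (1 + 1 : 'F_2) = 0. Proof. by apply/val_inj. Qed.
Lemma F2_xx (x : 'F_2) : x + x = 0.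
Proof. by rewrite -{1 2}(mulr1 x) -mulrDr F2_11 mulr0. Qed.
Lemma F2_N (x : 'F_2) : - x = x.
Proof. by apply/eqP; rewrite eq_sym -subr_eq0 opprK F2_xx. Qed.



Definition dl (n : nat) : 'F_2 := (pd n)%:~R.

Lemma dl_even i : dl (2 * i) = 1.
Proof. by rewrite /dl pd_even. Qed.

Lemma dl_odd i : dl (2 * i).+1 = 1 + dl i.
Proof. by rewrite /dl pd_odd intrB F2_N. Qed.

Lemma dl_shift m a : (a.+1 < 2 ^ m)%N -> dl (a + 2 ^ m) = dl a.
Proof.
elim: m a => [|m IH] a; first by rewrite expn0.
move=> ha; have [b [e|e]] := nat_par a; subst a.
  have -> : (2 * b + 2 ^ m.+1 = 2 * (b + 2 ^ m))%N by rewrite expnS; lia.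
  by rewrite !dl_even.
have -> : ((2 * b).+1 + 2 ^ m.+1 = (2 * (b + 2 ^ m)).+1)%N by rewrite expnS; lia.
rewrite !dl_odd IH //; move: ha; rewrite expnS; lia.
Qed.

Lemma dl_refl p n n' : (n + n' + 2 = 2 ^ p.+1)%N -> dl n = dl n'.
Proof.
elim: p n n' => [|p IH] n n'.
  by rewrite expn1 => h; have [-> ->] : n = 0%N /\ n' = 0%N by lia.
move=> h; have [a [e|e]] := nat_par n; have [b [e'|e']] := nat_par n'; subst n n'.
- by rewrite !dl_even.
- by move: h; rewrite expnS; lia.
- by move: h; rewrite expnS; lia.
- rewrite !dl_odd (IH a b) //; move: h; rewrite expnS; lia.
Qed.

Lemma sum_split n (F : nat -> 'F_2) :
  \sum_(0 <= l < 2 * n) F l = \sum_(0 <= l < n) (F (2 * l)%N + F (2 * l).+1).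
Proof.
elim: n => [|n IH]; first by rewrite muln0 !big_geq.
have -> : (2 * n.+1 = (2 * n).+2)%N by lia.
rewrite !big_nat_recr //= IH addrA //; lia.
Qed.

Definition W m a := \sum_(0 <= l < 2 ^ m) dl (a + l).

Lemma W_const m a : (a < 2 ^ m)%N -> W m a = W m 0.
Proof.
elim: a => [//|a IH] ha.
rewrite -IH; last by lia.
rewrite /W.
have hK : (2 ^ m = (2 ^ m).-1.+1)%N by rewrite prednK // expn_gt0.
move: ha; rewrite hK; set K := (2 ^ m).-1 => ha.
rewrite [in RHS]big_nat_recl // [in LHS]big_nat_recr //= addn0 addrC; congr (_ + _).
  by rewrite addSnnS /K -hK dl_shift //; lia.
by apply: eq_big_nat => l _; rewrite addSnnS.
Qed.

Lemma F2_key (x y : 'F_2) : 1 * 1 + (1 + x) * (1 + y) = x + y + x * y.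
Proof.
have -> : 1 * 1 + (1 + x) * (1 + y) = (1 + 1) + (x + y + x * y) by ring.
by rewrite F2_11 add0r.
Qed.

Lemma F2_key2 (x y : 'F_2) : 1 * (1 + y) + (1 + x) * 1 = x + y.
Proof.
have -> : 1 * (1 + y) + (1 + x) * 1 = (1 + 1) + (x + y) by ring.
by rewrite F2_11 add0r.
Qed.

Lemma WW m a b : (a < 2 ^ m)%N -> (b < 2 ^ m)%N ->
  \sum_(0 <= l < 2 ^ m) (dl (a + l) + dl (l + b)) = 0.
Proof.
move=> ha hb; rewrite big_split /=.
have -> : \sum_(0 <= l < 2 ^ m) dl (l + b) = W m b.
  by apply: eq_big_nat => l _; rewrite addnC.
by rewrite -/(W m a) !W_const // F2_xx.
Qed.

Lemma Hsq m i j : (i < 2 ^ m)%N -> (j < 2 ^ m)%N ->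
  \sum_(0 <= l < 2 ^ m) dl (i + l) * dl (l + j) = (i == j)%:R.
Proof.
elim: m i j => [|m IH] i j.
  rewrite expn0 => hi hj; have [-> ->] : i = 0%N /\ j = 0%N by lia.
  by rewrite big_nat1 (dl_even 0) mulr1.
rewrite expnS sum_split => hi hj.
have [a [e|e]] := nat_par i; have [b [e'|e']] := nat_par j; subst i j.
- have -> : \sum_(0 <= l < 2 ^ m) (dl (2 * a + 2 * l) * dl (2 * l + 2 * b) +
      dl (2 * a + (2 * l).+1) * dl ((2 * l).+1 + 2 * b)) =
      \sum_(0 <= l < 2 ^ m) ((dl (a + l) + dl (l + b)) + dl (a + l) * dl (l + b)).
    apply: eq_big_nat => l _.
    have -> : (2 * a + 2 * l = 2 * (a + l))%N by lia.
    have -> : (2 * l + 2 * b = 2 * (l + b))%N by lia.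
    have -> : (2 * a + (2 * l).+1 = (2 * (a + l)).+1)%N by lia.
    have -> : ((2 * l).+1 + 2 * b = (2 * (l + b)).+1)%N by lia.
    by rewrite !dl_even !dl_odd F2_key.
  rewrite big_split /= WW ?add0r ?IH ?eqn_mul2l //; lia.
- have -> : \sum_(0 <= l < 2 ^ m) (dl (2 * a + 2 * l) * dl (2 * l + (2 * b).+1) +
      dl (2 * a + (2 * l).+1) * dl ((2 * l).+1 + (2 * b).+1)) =
      \sum_(0 <= l < 2 ^ m) (dl (a + l) + dl (l + b)).
    apply: eq_big_nat => l _.
    have -> : (2 * a + 2 * l = 2 * (a + l))%N by lia.
    have -> : (2 * l + (2 * b).+1 = (2 * (l + b)).+1)%N by lia.
    have -> : (2 * a + (2 * l).+1 = (2 * (a + l)).+1)%N by lia.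
    have -> : ((2 * l).+1 + (2 * b).+1 = (2 * (l + b).+1))%N by lia.
    by rewrite !dl_even !dl_odd F2_key2.
  rewrite WW; try lia.
  by have -> : (2 * a == (2 * b).+1)%N = false by apply/eqP; lia.
- have -> : \sum_(0 <= l < 2 ^ m) (dl ((2 * a).+1 + 2 * l) * dl (2 * l + 2 * b) +
      dl ((2 * a).+1 + (2 * l).+1) * dl ((2 * l).+1 + 2 * b)) =
      \sum_(0 <= l < 2 ^ m) (dl (a + l) + dl (l + b)).
    apply: eq_big_nat => l _.
    have -> : ((2 * a).+1 + 2 * l = (2 * (a + l)).+1)%N by lia.
    have -> : (2 * l + 2 * b = 2 * (l + b))%N by lia.
    have -> : ((2 * a).+1 + (2 * l).+1 = (2 * (a + l).+1))%N by lia.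
    have -> : ((2 * l).+1 + 2 * b = (2 * (l + b)).+1)%N by lia.
    by rewrite !dl_even !dl_odd addrC F2_key2 addrC.
  rewrite WW; try lia.
  by have -> : ((2 * a).+1 == 2 * b)%N = false by apply/eqP; lia.
- have -> : \sum_(0 <= l < 2 ^ m) (dl ((2 * a).+1 + 2 * l) * dl (2 * l + (2 * b).+1) +
      dl ((2 * a).+1 + (2 * l).+1) * dl ((2 * l).+1 + (2 * b).+1)) =
      \sum_(0 <= l < 2 ^ m) ((dl (a + l) + dl (l + b)) + dl (a + l) * dl (l + b)).
    apply: eq_big_nat => l _.
    have -> : ((2 * a).+1 + 2 * l = (2 * (a + l)).+1)%N by lia.
    have -> : (2 * l + (2 * b).+1 = (2 * (l + b)).+1)%N by lia.
    have -> : ((2 * a).+1 + (2 * l).+1 = (2 * (a + l).+1))%N by lia.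
    have -> : ((2 * l).+1 + (2 * b).+1 = (2 * (l + b).+1))%N by lia.
    by rewrite !dl_even !dl_odd addrC F2_key.
  rewrite big_split /= WW ?add0r ?IH ?eqSS ?eqn_mul2l //; lia.
Qed.



Lemma P2_11 : (1 + 1 : {poly 'F_2}) = 0.
Proof. by rewrite -polyC1 -polyCD F2_11 polyC0. Qed.

Lemma P2_xx (p : {poly 'F_2}) : p + p = 0.
Proof. by rewrite -{1 2}(mulr1 p) -mulrDr P2_11 mulr0. Qed.

Lemma P2_N (p : {poly 'F_2}) : - p = p.
Proof. by apply/eqP; rewrite eq_sym -subr_eq0 opprK P2_xx. Qed.

Definition Hm n : 'M['F_2]_n := \matrix_(i, j) dl (i + j).
Definition Qm n : 'M[{poly 'F_2}]_n :=
  \matrix_(i, j) if i == j then 'X else (dl (i + j))%:P.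

Lemma Hm_sq m : Hm (2 ^ m) *m Hm (2 ^ m) = 1%:M.
Proof.
apply/matrixP => i j; rewrite !mxE.
under eq_bigr do rewrite !mxE.
rewrite -(big_mkord xpredT (fun l => dl (i + l) * dl (l + j))) Hsq //.
Qed.

Lemma Qm_eq n : Qm n = ('X + 1)%:M + map_mx polyC (Hm n).
Proof.
apply/matrixP => i j; rewrite !mxE; case: eqP => [->|_].
  rewrite addnn -mul2n dl_even mulr1n -addrA P2_11 addr0 //.
by rewrite mulr0n add0r.
Qed.

Lemma zmod_re (V : zmodType) (a b c : V) : a + b + (b + c) = a + c + (b + b).
Proof. by rewrite [b + c]addrC addrACA. Qed.

Lemma Qm_sq n m : n = (2 ^ m)%N -> Qm n *m Qm n = ('X ^+ 2)%:M.
Proof.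
move=> ->; rewrite Qm_eq mulmxDl !mulmxDr !mul_scalar_mx mul_mx_scalar.
rewrite -map_mxM Hm_sq map_mx1 scale_scalar_mx zmod_re.
rewrite -scalerDl P2_xx scale0r addr0; apply/matrixP => i j; rewrite !mxE -mulrnDl; congr (_ *+ _).
have -> : ('X + 1) * ('X + 1) + 1 = 'X ^+ 2 + ('X + 'X) + (1 + 1 : {poly 'F_2}) by ring.
by rewrite P2_xx P2_11 !addr0.
Qed.

Lemma sq_inj (p q : {poly 'F_2}) : p * p = q * q -> p = q.
Proof.
move=> h; have : (p + q) * (p + q) = 0.
  have -> : (p + q) * (p + q) = p * p + q * q + (p * q + p * q) by ring.
  by rewrite h !P2_xx.
move/eqP; rewrite mulf_eq0 orbb addr_eq0 P2_N => /eqP //.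
Qed.

Lemma detQ_pow n m : n = (2 ^ m)%N -> \det (Qm n) = 'X ^+ n.
Proof.
move=> hn; apply: sq_inj; rewrite -det_mulmx (Qm_sq hn) det_scalar -exprM -exprD.
by rewrite mulnC addnn muln2.
Qed.

Lemma detD k r p : (k + r = 2 ^ p)%N ->
  \det (drsubmx (Qm (k + r))) = \det (Qm r).
Proof.
move=> hkr; pose s : 'S_r := perm (@rev_ord_inj r).
have -> : drsubmx (Qm (k + r)) = row_perm s (col_perm s (Qm r)).
  apply/matrixP => i j; rewrite !mxE !permE /=.
  rewrite (inj_eq (@rshift_inj _ _)) (inj_eq rev_ord_inj); case: eqP => // _.
  congr (_%:P); apply: (@dl_refl p); rewrite expnS -hkr /=.
  have := ltn_ord i; have := ltn_ord j; lia.
rewrite row_permE col_permE !det_mulmx !det_perm !P2_N !expr1n mul1r mulr1 //.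
Qed.

Lemma det_step k r p : (k + r = 2 ^ p)%N ->
  \det (Qm (k + r)) * \det (drsubmx (Qm (k + r))) = \det (Qm k) * ('X ^+ 2) ^+ r.
Proof.
move=> hkr; set Q := Qm (k + r).
have hsq : Q *m Q = ('X ^+ 2)%:M := Qm_sq hkr.
have hA : ulsubmx Q = Qm k.
  apply/matrixP => i j; rewrite !mxE /= (inj_eq (@lshift_inj _ _)) //.
rewrite -[Q]submxK in hsq.
rewrite mulmx_block (scalar_mx_block k r) in hsq.
have [_ hB _ hD] := eq_block_mx hsq.
have := congr1 determinant (mulmx_block (ulsubmx Q) (ursubmx Q) (dlsubmx Q) (drsubmx Q) 1%:M (ursubmx Q) 0 (drsubmx Q)).
rewrite submxK det_mulmx det_ublock det1 mul1r => ->.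
rewrite hB hD !mulmx1 !mulmx0 !addr0 det_lblock hA det_scalar //.
Qed.

Lemma detQ k : \det (Qm k) = 'X ^+ k.
Proof.
elim/ltn_ind: k => k IH.
case: k IH => [|k'] IH; first by rewrite det_mx00 expr0.
have h1 : (2 ^ trunc_log 2 k'.+1 <= k'.+1)%N := trunc_logP (isT : (1 < 2)%N) (ltn0Sn _).
have h2 : (k'.+1 < 2 ^ (trunc_log 2 k'.+1).+1)%N := trunc_log_ltn _ (isT : (1 < 2)%N).
move: h1 h2; set k := k'.+1; set m := trunc_log 2 k => h1 h2.
case: (eqVneq k (2 ^ m)%N) => [hk|hk]; first exact: detQ_pow hk.
have hkr : (k + (2 ^ m.+1 - k) = 2 ^ m.+1)%N by lia.
have hr : (2 ^ m.+1 - k < k)%N.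
  have : (2 ^ m < k)%N by rewrite ltn_neqAle eq_sym hk h1.
  rewrite expnS; lia.
have := det_step hkr; rewrite (detD hkr) (IH _ hr) (detQ_pow hkr).
set r := (2 ^ m.+1 - k)%N => h.
apply: (@mulIf _ (('X ^+ 2) ^+ r)); first by rewrite !expf_neq0 // polyX_eq0.
rewrite -h -!exprM -!exprD; congr (_ ^+ _); lia.
Qed.



Lemma F2_int0 (c : int) : (c%:~R : 'F_2) = 0 -> (2 %| c)%Z.
Proof.
rewrite {1}(divz_eq c 2) intrD intrM.
have -> : ((2 : int)%:~R : 'F_2) = 0 by apply/val_inj.
rewrite mulr0 add0r => h; apply/dvdz_mod0P.
have h0 : 0 <= (c %% 2)%Z by apply: modz_ge0.
have h1 : (c %% 2)%Z < 2 by apply: ltz_pmod.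
have [e|e] : (c %% 2)%Z = 0 \/ (c %% 2)%Z = 1 by lia.
  by [].
by move: h; rewrite e => /eqP; rewrite oner_eq0.
Qed.

Definition Bm k : 'M[int]_k := \matrix_(i, j) if i == j then 0 else - pd (i + j).

Lemma tH_char k : tHankel pd k = char_poly (Bm k).
Proof.
rewrite /tHankel /char_poly; congr (\det _); apply/matrixP => i j.
rewrite !mxE; case: eqP => [->|_].
  by rewrite addnn -mul2n pd_even polyC1 mul1r mulr1n subr0.
by rewrite mulr0n sub0r polyCN opprK.
Qed.

Lemma tH_map k : map_poly (intr : int -> 'F_2) (tHankel pd k) = 'X ^+ k.
Proof.
rewrite /tHankel -det_map_mx -(detQ k); congr (\det _); apply/matrixP => i j.
rewrite !mxE; case: eqP => [->|_].
  by rewrite rmorphM /= map_polyC map_polyX /= addnn -mul2n -/(dl _) dl_even polyC1 mul1r.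
by apply/polyP => l; rewrite coef_map !coefC; case: (l == 0)%N.
Qed.

Theorem theorem1p2 (k : nat) : (0 < k)%N ->
  size (tHankel pd k) = k.+1 /\ poly_congr 2 (tHankel pd k) ('X^k).
Proof.
move=> _; split; first by rewrite tH_char size_char_poly.
move=> i; apply: F2_int0.
have := congr1 (fun p : {poly 'F_2} => p`_i) (tH_map k).
rewrite coef_map /= => h.
by rewrite coefB intrB h -(map_polyXn (intr : int -> 'F_2)) coef_map subrr.
Qed.
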